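(* Let $\rho$ be an invertible $n\times n$ density matrix (positive definite with $\mathrm{Tr}[\rho]=1$), let $A,B$ be $n\times n$ Hermitian matrices, and let $\alpha,\beta\ge 0$ satisfy either $\alpha+\beta\ge 1$ or $\alpha+\beta\le \tfrac12$. Then $$U_{\rho,\alpha,\beta}(A)\,U_{\rho,\alpha,\beta}(B)\ \ge\ \alpha\beta\,\bigl|\mathrm{Tr}[\rho[A,B]]\bigr|^2,$$ where $[A,B]=AB-BA$.
   Context: For a Hermitian matrix $H$ put $H_0=H-\mathrm{Tr}[\rho H]I$. Define $$I_{\rho,\alpha,\beta}(H)=\tfrac12\bigl\{\mathrm{Tr}[\rho H_0^2]+\mathrm{Tr}[\rho^{\alpha+\beta}H_0\rho^{1-\alpha-\beta}H_0]-\mathrm{Tr}[\rho^{\alpha}H_0\rho^{1-\alpha}H_0]-\mathrm{Tr}[\rho^{\beta}H_0\rho^{1-\beta}H_0]\bigr\},$$ $$J_{\rho,\alpha,\beta}(H)=\tfrac12\bigl\{\mathrm{Tr}[\rho H_0^2]+\mathrm{Tr}[\rho^{\alpha+\beta}H_0\rho^{1-\alpha-\beta}H_0]+\mathrm{Tr}[\rho^{\alpha}H_0\rho^{1-\alpha}H_0]+\mathrm{Tr}[\rho^{\beta}H_0\rho^{1-\beta}H_0]\bigr\},$$ and $U_{\rho,\alpha,\beta}(H)=\sqrt{I_{\rho,\alpha,\beta}(H)\,J_{\rho,\alpha,\beta}(H)}$. Real powers of $\rho$ are defined by functional calculus (well defined since $\rho$ is invertible); $\alpha+\beta\le 1$ is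 not required. *)

(* Defs.v *)
From HB Require Import structures.
From mathcomp Require Import all_boot all_order all_algebra.
From mathcomp Require Import sesquilinear spectral.
From mathcomp Require Import complex.
From mathcomp Require Import reals exp.
Set Implicit Arguments. Unset Strict Implicit. Unset Printing Implicit Defensive.
Import Order.TTheory GRing.Theory Num.Theory.
Local Open Scope ring_scope.
Local Open Scope sesquilinear_scope.

Section Defs.
Context {R : realType} {n : nat}.
Local Notation C := (R[i]).

Definition posdefmx (rho : 'M[C]_n) : Prop :=
  rho \is hermsymmx /\
  forall v : 'rV[C]_n, v != 0 -> 0 < (v *m rho *m v ^t*) 0 0.

Definition density_mx (rho : 'M[C]_n) : Prop := posdefmx rho /\ \tr rho = 1.

(* Real power rho^t by functional calculus, using the spectral decomposition
   rho = P^* diag(d) P  (P = spectralmx rho unitary, d = spectral_diag rho):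
   rho^t := P^* diag(d_i^t) P. For Hermitian rho the d_i are real; for
   positive definite rho they are > 0, so d_i^t = exp(t ln d_i). *)
Definition mxpowR (rho : 'M[C]_n) (t : R) : 'M[C]_n :=
  let P := spectralmx rho in
  P ^t* *m diag_mx (map_mx (fun z : C => real_complex R (powR (complex.Re z) t))
                            (spectral_diag rho)) *m P.

Definition centered (rho H : 'M[C]_n) : 'M[C]_n := H - (\tr (rho *m H))%:M.

Definition skew_term (rho H : 'M[C]_n) (a : R) : C :=
  let H0 := centered rho H in
  \tr (mxpowR rho a *m H0 *m mxpowR rho (1 - a) *m H0).

Definition Ifun (rho : 'M[C]_n) (a b : R) (H : 'M[C]_n) : C :=
  let H0 := centered rho H in
  2^-1 * (\tr (rho *m (H0 *m H0)) + skew_term rho H (a + b)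
          - skew_term rho H a - skew_term rho H b).

Definition Jfun (rho : 'M[C]_n) (a b : R) (H : 'M[C]_n) : C :=
  let H0 := centered rho H in
  2^-1 * (\tr (rho *m (H0 *m H0)) + skew_term rho H (a + b)
          + skew_term rho H a + skew_term rho H b).

Definition Ufun (rho : 'M[C]_n) (a b : R) (H : 'M[C]_n) : C :=
  sqrtC (Ifun rho a b H * Jfun rho a b H).

Definition commmx (A B : 'M[C]_n) : 'M[C]_n := A *m B - B *m A.

End Defs.

(* Main.v *)
Require Import Defs.
From HB Require Import structures.
From mathcomp Require Import all_boot all_order all_algebra.
From mathcomp Require Import sesquilinear spectral complex.
From mathcomp Require Import reals exp.
From mathcomp Require Import boolp classical_sets topology normedtype sequences derive realfun.
From mathcomp Require Import lra ring.
Import Order.TTheory GRing.Theory Num.Theory.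
Local Open Scope ring_scope.
Set Implicit Arguments. Unset Strict Implicit. Unset Printing Implicit Defensive.

Module AnalysisPart.
Import numFieldNormedType.Exports.
Section S.
Variable R : realType.
Definition sh (x : R) := expR x - expR (- x).
Definition ch (x : R) := expR x + expR (- x).
Lemma inv_mono (X Y : R) : 1 <= Y -> Y <= X -> Y + Y^-1 <= X + X^-1.
Proof.
move=> Y1 YX.
have X0 : 0 < X by lra.
have Y0 : 0 < Y by lra.
have hX : X * X^-1 = 1 by rewrite mulfV // gt_eqF.
have hY : Y * Y^-1 = 1 by rewrite mulfV // gt_eqF.
have iX0 : 0 < X^-1 by rewrite invr_gt0.
have iY0 : 0 < Y^-1 by rewrite invr_gt0.
have e : Y^-1 - X^-1 = (X - Y) * (X^-1 * Y^-1).
  by rewrite mulrBl mulrA hX mul1r mulrCA hY mulr1.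
have h1 : X^-1 * Y^-1 <= 1.
  rewrite -invfM invr_le1 ?unitfE ?mulf_neq0 ?gt_eqF//; last by rewrite mulr_gt0.
  nra.
have : (X - Y) * (X^-1 * Y^-1) <= (X - Y) * 1 by apply: ler_wpM2l; lra.
lra.
Qed.
Lemma ch_mono x y : 0 <= y -> y <= x -> ch y <= ch x.
Proof.
move=> y0 yx; rewrite /ch !expRN; apply: inv_mono.
  by rewrite -expR0 ler_expR.
by rewrite ler_expR.
Qed.
Lemma test (mu : R) (x : R) : is_derive x (1:R) (fun x => mu * (expR x - expR (- x)) - (expR (mu * x) - expR (- (mu * x)))) (mu * (ch x - ch (mu*x))).
Proof.
apply: trigger_derive.
by rewrite /GRing.scale/= /ch !mulr1 mulrN1 opprK !mulrN opprK; ring.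
Qed.

Lemma sh_key (mu m : R) : 0 <= m -> 0 <= mu -> mu <= 1 -> sh (mu * m) <= mu * sh m.
Proof.
move=> m0 mu0 mu1.
set f := (fun x : R => mu * (expR x - expR (- x)) - (expR (mu * x) - expR (- (mu * x)))).
have df : forall x, derivable f x 1 by move=> x; rewrite /f; apply: ex_derive; exact: test.
have cf : continuous f.
  by move=> x; apply/differentiable_continuous/derivable1_diffP; exact: df.
have := @ger0_derive1_ndecr R f 0 m (fun x _ => df x) _ (continuous_subspaceT cf) 0 m (lexx 0) m0 (lexx m).
have -> : f 0 = 0 by rewrite /f !mulr0 oppr0 subrr mulr0 subrr.
rewrite /f subr_ge0 /sh; apply.
move=> x; rewrite in_itv /= => /andP[x0 xm].
rewrite derive1E /f (@derive_val _ _ _ _ _ _ _ (test mu x)).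
apply: mulr_ge0 => //; rewrite subr_ge0; apply: ch_mono.
  by apply: mulr_ge0 => //; apply: ltW.
by rewrite -[leRHS]mul1r ler_wpM2r // ltW.
Qed.

Lemma expR_neq0 x : expR x != 0 :> R. Proof. by rewrite gt_eqF // expR_gt0. Qed.

Lemma sh_prod X Y : sh (X + Y) * sh (X - Y) = sh X ^+ 2 - sh Y ^+ 2.
Proof.
rewrite /sh !opprD !opprK !expRD !expRN.
have := expR_neq0 X; have := expR_neq0 Y.
move: (expR X) (expR Y) => p q hq hp.
by field; rewrite hp hq.
Qed.

Lemma sh_ch X Y : sh X * ch Y = sh (X + Y) + sh (X - Y).
Proof.
rewrite /sh /ch !opprD !opprK !expRD !expRN.
have := expR_neq0 X; have := expR_neq0 Y.
move: (expR X) (expR Y) => p q hq hp.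
by field; rewrite hp hq.
Qed.

Lemma shN x : sh (- x) = - sh x.
Proof. by rewrite /sh opprK opprB. Qed.
Lemma chN x : ch (- x) = ch x.
Proof. by rewrite /ch opprK addrC. Qed.
Lemma sh0 : sh 0 = 0.
Proof. by rewrite /sh oppr0 subrr. Qed.
Lemma sh_ge0 x : 0 <= x -> 0 <= sh x.
Proof. by move=> x0; rewrite /sh subr_ge0 ler_expR; lra. Qed.

Lemma core_sh_pos (a b v : R) : 0 <= a -> 0 <= b ->
  (1 <= a + b \/ a + b <= 2^-1) -> 0 <= v ->
  16 * (a * b) * sh v ^+ 2 <= sh (2 * a * v) * sh (2 * b * v) * ch ((1 - (a + b)) * v) ^+ 2.
Proof.
move=> a0 b0 hs v0.
have [->|an0] := eqVneq a 0.
  by rewrite !(mul0r, mulr0, sh0).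
have [->|bn0] := eqVneq b 0.
  by rewrite !(mul0r, mulr0, sh0).
have ap : 0 < a by rewrite lt_def an0.
have bp : 0 < b by rewrite lt_def bn0.
set s := a + b.
have sp : 0 < s by rewrite /s; lra.
have I1 : sh (2 * a * v) * sh (2 * b * v) = sh (s * v) ^+ 2 - sh ((a - b) * v) ^+ 2.
  rewrite -sh_prod; congr (sh _ * sh _); rewrite /s; ring.
set d := `|a - b|.
have d0 : 0 <= d by rewrite /d normr_ge0.
have ds : d <= s by rewrite /d /s; case: (lerP 0 (a - b)) => h; [rewrite ger0_norm //|rewrite ltr0_norm //]; lra.
have K1 : sh ((d / s) * (s * v)) <= (d / s) * sh (s * v).
  apply: sh_key; first by apply: mulr_ge0 => //; exact: ltW.
    by apply: divr_ge0 => //; exact: ltW.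
  by rewrite ler_pdivrMr // mul1r.
have e1 : (d / s) * (s * v) = d * v by field; rewrite gt_eqF.
rewrite e1 in K1.
have K1' : sh ((a - b) * v) ^+ 2 <= (d / s) ^+ 2 * sh (s * v) ^+ 2.
  have -> : sh ((a - b) * v) ^+ 2 = sh (d * v) ^+ 2.
    rewrite /d; case: (lerP 0 (a - b)) => h; [rewrite ger0_norm //|rewrite ltr0_norm // mulNr shN sqrrN] => //.
  rewrite -exprMn; apply: lerXn2r => //; rewrite ?nnegrE.
  - by apply: sh_ge0; apply: mulr_ge0.
  - apply: mulr_ge0; first by apply: divr_ge0 => //; exact: ltW.
    by apply: sh_ge0; apply: mulr_ge0 => //; exact: ltW.
have ed : (d / s) ^+ 2 = 1 - 4 * (a * b) / s ^+ 2.
  rewrite expr_div_n.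
  have -> : d ^+ 2 = (a - b) ^+ 2 by rewrite /d real_normK // num_real.
  rewrite /s; field; lra.
have S1 : 4 * (a * b) / s ^+ 2 * sh (s * v) ^+ 2 <= sh (2 * a * v) * sh (2 * b * v).
  rewrite I1; move: K1'; rewrite ed; lra.
set k := 2 * s - 1.
have I3 : sh (s * v) * ch ((1 - s) * v) = sh v + sh (k * v).
  rewrite sh_ch; congr (sh _ + sh _); rewrite /k; ring.
have shv0 : 0 <= sh v by exact: sh_ge0.
have F2 : k * sh v <= sh (k * v).
  case: hs => hs.
  - have kp : 0 < k by move: hs; rewrite /k /s; lra.
    have kinv : 0 <= k^-1 by rewrite invr_ge0 ltW.
    have := @sh_key k^-1 (k * v) (mulr_ge0 (ltW kp) v0) kinv.
    rewrite mulrA mulVf ?gt_eqF // mul1r => h.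
    have h1 : k^-1 <= 1 by rewrite invf_le1 //; move: hs; rewrite /k /s; lra.
    have := h h1.
    by rewrite ler_pdivlMl // mulrC.
  - have kn : k <= 0 by move: hs; rewrite /k /s; lra.
    have := @sh_key (- k) v v0.
    rewrite oppr_ge0 => /(_ kn).
    have h1 : - k <= 1 by move: sp; rewrite /k /s; lra.
    move=> /(_ h1); rewrite mulNr shN mulNr; lra.
have S2 : (2 * s * sh v) ^+ 2 <= (sh v + sh (k * v)) ^+ 2.
  apply: lerXn2r; rewrite ?nnegrE.
  - by apply: mulr_ge0 => //; apply: mulr_ge0 => //; exact: ltW.
  - have : 0 <= k * sh v + sh v.
      have -> : k * sh v + sh v = 2 * s * sh v by rewrite /k; ring.
      by apply: mulr_ge0 => //; apply: mulr_ge0 => //; exact: ltW.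
    lra.
  - have -> : 2 * s * sh v = sh v + k * sh v by rewrite /k; ring.
    lra.
rewrite -I3 in S2.
have chp : 0 <= ch ((1 - s) * v) ^+ 2 by exact: sqr_ge0.
have := ler_wpM2r chp S1.
have e3 : 4 * (a * b) / s ^+ 2 * sh (s * v) ^+ 2 * ch ((1 - s) * v) ^+ 2
    = 4 * (a * b) / s ^+ 2 * (sh (s * v) * ch ((1 - s) * v)) ^+ 2 by rewrite exprMn; ring.
rewrite e3; apply: le_trans.
have cab : 0 <= 4 * (a * b) / s ^+ 2.
  by apply: divr_ge0; [apply: mulr_ge0 => //; apply: mulr_ge0; exact: ltW|exact: sqr_ge0].
have := ler_wpM2l cab S2.
have -> : 4 * (a * b) / s ^+ 2 * (2 * s * sh v) ^+ 2 = 16 * (a * b) * sh v ^+ 2.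
  by field; lra.
by [].
Qed.

Lemma core_sh (a b v : R) : 0 <= a -> 0 <= b ->
  (1 <= a + b \/ a + b <= 2^-1) ->
  16 * (a * b) * sh v ^+ 2 <= sh (2 * a * v) * sh (2 * b * v) * ch ((1 - (a + b)) * v) ^+ 2.
Proof.
move=> a0 b0 hs; have [v0|v0] := lerP 0 v; first exact: core_sh_pos.
have nv : 0 <= - v by rewrite oppr_ge0 ltW.
have := @core_sh_pos a b (- v) a0 b0 hs nv.
by rewrite !mulrN !shN chN !sqrrN mulrNN.
Qed.

Definition pw (x y t : R) := x `^ t * y `^ (1 - t).
Definition gI (a b x y : R) := pw x y 1 + pw x y (a + b) - pw x y a - pw x y b.
Definition gJ (a b x y : R) := pw x y 1 + pw x y (a + b) + pw x y a + pw x y b.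

Lemma sh2 c v : sh (2 * c * v) = expR (c * v) ^+ 2 - (expR (c * v) ^+ 2)^-1.
Proof. by rewrite /sh expRN -expRM_natr; congr (expR _ - (expR _)^-1); ring. Qed.

Lemma pair_ineq (a b x y : R) : 0 <= a -> 0 <= b -> (1 <= a + b \/ a + b <= 2^-1) ->
  0 < x -> 0 < y ->
  16 * (a * b) * (x - y) ^+ 2 <= (gI a b x y + gI a b y x) * (gJ a b x y + gJ a b y x).
Proof.
move=> a0 b0 hs x0 y0.
set L := ln x; set M := ln y; set v := (L - M) / 2.
have hx : x = expR L by rewrite /L lnK.
have hy : y = expR M by rewrite /M lnK.
have pwE : forall t, pw x y t = expR M * expR (t * v) ^+ 2.
  move=> t; rewrite /pw /powR !gt_eqF // -/L -/M -expRM_natr -!expRD.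
  by congr expR; rewrite /v; field.
have pwE' : forall t, pw y x t = expR M * expR v ^+ 2 / expR (t * v) ^+ 2.
  move=> t; rewrite /pw /powR !gt_eqF // -/L -/M -!expRM_natr -expRN -!expRD.
  by congr expR; rewrite /v; field.
have := @core_sh a b v a0 b0 hs.
rewrite !sh2 /gI /gJ !pwE !pwE'.
have -> : (1 - (a + b)) * v = v - (a * v + b * v) by ring.
rewrite !mul1r /ch /sh !expRN mulrDl expRB !expRD.
rewrite hx hy.
have -> : L = M + v * 2 by rewrite /v; field.
rewrite expRD expRM_natr (mulrDl a b v) expRD.
have := expR_gt0 (a * v); have := expR_gt0 (b * v); have := expR_gt0 v; have := expR_gt0 M.
move: (expR (a * v)) (expR (b * v)) (expR v) (expR M) => P Q V Y Y0 V0 Q0 P0 key.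
have e1 : (Y * V ^+ 2 - Y) ^+ 2 = (Y * V) ^+ 2 * (V - V^-1) ^+ 2.
  by field; rewrite gt_eqF.
rewrite e1 mulrCA.
apply: (le_trans (ler_wpM2l (sqr_ge0 (Y * V)) key)).
rewrite le_eqVlt; apply/orP; left; apply/eqP.
by field; rewrite !gt_eqF.
Qed.

Lemma pair_pos (a b x y : R) : 0 <= a -> 0 <= b -> (1 <= a + b \/ a + b <= 2^-1) ->
  0 < x -> 0 < y ->
  0 <= gI a b x y + gI a b y x /\ 0 < gJ a b x y + gJ a b y x.
Proof.
move=> a0 b0 hs x0 y0.
have hJ : 0 < gJ a b x y + gJ a b y x.
  by rewrite /gJ /pw; apply: addr_gt0; repeat apply: addr_gt0; apply: mulr_gt0; apply: powR_gt0.
split => //.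
have := @pair_ineq a b x y a0 b0 hs x0 y0.
have h0 : 0 <= 16 * (a * b) * (x - y) ^+ 2.
  by apply: mulr_ge0; [apply: mulr_ge0 => //; apply: mulr_ge0|apply: sqr_ge0].
move=> /(le_trans h0); rewrite pmulr_lge0 //.
Qed.

Lemma cs_weighted (I : finType) (c : R) (p q r : I -> R) :
  0 <= c -> (forall k, 0 <= p k) -> (forall k, 0 <= q k) -> (forall k, 0 <= r k) ->
  (forall k, c * p k ^+ 2 <= q k * r k) ->
  c * (\sum_k p k) ^+ 2 <= (\sum_k q k) * (\sum_k r k).
Proof.
move=> c0 p0 q0 r0 h.
have pt : forall k l, c * (p k * p l) <= (q k * r l + q l * r k) / 2.
  move=> k l.
  have X0 : 0 <= c * (p k * p l) by apply: mulr_ge0 => //; apply: mulr_ge0.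
  have Y0 : 0 <= (q k * r l + q l * r k) / 2.
    by apply: divr_ge0 => //; apply: addr_ge0; apply: mulr_ge0.
  rewrite -(ler_pXn2r (_ : 0 < 2)%N) ?nnegrE //.
  have -> : (c * (p k * p l)) ^+ 2 = (c * p k ^+ 2) * (c * p l ^+ 2) by ring.
  apply: (le_trans (y := (q k * r k) * (q l * r l))).
    apply: ler_pM => //; apply: mulr_ge0 => //; exact: sqr_ge0.
  have : 0 <= (q k * r l - q l * r k) ^+ 2 by exact: sqr_ge0.
  move=> hh; rewrite expr_div_n ler_pdivlMr ?exprn_gt0 //.
  have -> : (q k * r l + q l * r k) ^+ 2 = (q k * r l - q l * r k) ^+ 2 + q k * r k * (q l * r l) * 2 ^+ 2 by ring.
  by rewrite lerDr.
rewrite expr2 mulr_suml mulr_sumr.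
apply: (le_trans (y := \sum_k \sum_l (q k * r l + q l * r k) / 2)).
  apply: ler_sum => k _; rewrite mulr_sumr mulr_sumr; apply: ler_sum => l _.
  by apply: le_trans (pt k l); rewrite le_eqVlt; apply/orP; left; apply/eqP; ring.
have E1 : forall k, \sum_l (q k * r l + q l * r k) / 2 =
    ((\sum_l q k * r l) + (\sum_l q l * r k)) / 2.
  by move=> k; rewrite -big_split big_distrl.
rewrite (eq_bigr _ (fun k _ => E1 k)) -big_distrl big_split /= [X in _ + X]exchange_big /=.
have E2 : \sum_i \sum_j q i * r j = (\sum_k q k) * (\sum_k r k).
  by rewrite mulr_suml; apply: eq_bigr => i _; rewrite mulr_sumr.
rewrite E2; rewrite le_eqVlt; apply/orP; left; apply/eqP; by field.
Qed.

Lemma real_core n (lam : 'I_n -> R) (u v : 'I_n -> 'I_n -> R) (a b : R) :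
  0 <= a -> 0 <= b -> (1 <= a + b \/ a + b <= 2^-1) ->
  (forall i, 0 < lam i) ->
  (forall i j, 0 <= u i j) -> (forall i j, u i j = u j i) ->
  (forall i j, 0 <= v i j) -> (forall i j, v i j = v j i) ->
  a * b * (\sum_i \sum_j `|lam i - lam j| * u i j * v i j) ^+ 2 <=
  (2^-1 * \sum_i \sum_j gI a b (lam i) (lam j) * u i j ^+ 2) *
  (2^-1 * \sum_i \sum_j gJ a b (lam i) (lam j) * v i j ^+ 2).
Proof.
move=> a0 b0 hs lp u0 us v0 vs.
have sym : forall (g : R -> R -> R) (w : 'I_n -> 'I_n -> R), (forall i j, w i j = w j i) ->
    2^-1 * \sum_i \sum_j g (lam i) (lam j) * w i j ^+ 2 =
    \sum_i \sum_j ((g (lam i) (lam j) + g (lam j) (lam i)) / 4 * w i j ^+ 2).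
  move=> g w ws.
  have e : \sum_i \sum_j g (lam i) (lam j) * w i j ^+ 2 =
           \sum_i \sum_j g (lam j) (lam i) * w i j ^+ 2.
    rewrite exchange_big /=; apply: eq_bigr => i _; apply: eq_bigr => j _.
    by rewrite ws.
  have -> : \sum_i \sum_j ((g (lam i) (lam j) + g (lam j) (lam i)) / 4 * w i j ^+ 2) =
      4^-1 * (\sum_i \sum_j g (lam i) (lam j) * w i j ^+ 2 +
              \sum_i \sum_j g (lam j) (lam i) * w i j ^+ 2).
    rewrite -big_split mulr_sumr; apply: eq_bigr => i _ /=.
    rewrite -big_split mulr_sumr; apply: eq_bigr => j _ /=; ring.
  by rewrite -e; field.
rewrite (sym (gI a b)) // (sym (gJ a b)) //.
rewrite !pair_bigA /=.
apply: cs_weighted.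
- by apply: mulr_ge0.
- by move=> [i j] /=; apply: mulr_ge0; [apply: mulr_ge0|].
- move=> [i j] /=; apply: mulr_ge0; last exact: sqr_ge0.
  apply: divr_ge0 => //.
  by have [] := @pair_pos a b (lam i) (lam j) a0 b0 hs (lp i) (lp j).
- move=> [i j] /=; apply: mulr_ge0; last exact: sqr_ge0.
  apply: divr_ge0 => //; apply: ltW.
  by have [] := @pair_pos a b (lam i) (lam j) a0 b0 hs (lp i) (lp j).
move=> [i j] /=.
have := @pair_ineq a b (lam i) (lam j) a0 b0 hs (lp i) (lp j).
set G := gI a b _ _ + _; set K := gJ a b _ _ + _ => h.
have -> : a * b * (`|lam i - lam j| * u i j * v i j) ^+ 2 =
   (16 * (a * b) * (lam i - lam j) ^+ 2) * ((u i j * v i j) ^+ 2 / 16).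
  by rewrite !exprMn real_normK ?num_real //; field.
have -> : G / 4 * u i j ^+ 2 * (K / 4 * v i j ^+ 2) = (G * K) * ((u i j * v i j) ^+ 2 / 16).
  by field.
apply: ler_wpM2r => //; apply: divr_ge0 => //; exact: sqr_ge0.
Qed.
End S.
End AnalysisPart.
Import AnalysisPart.

Local Open Scope sesquilinear_scope.

Lemma hermE {C : numClosedFieldType} n (M : 'M[C]_n) :
  M \is hermsymmx -> forall i j, M i j = (M j i)^*.
Proof. by move=> /is_hermitianmxP h i j; rewrite {1}h expr0 scale1r !mxE. Qed.

Lemma tmulC {C : numClosedFieldType} m n p (A : 'M[C]_(m, n)) (B : 'M[C]_(n, p)) :
  (A *m B)^t* = B^t* *m A^t*.
Proof. by rewrite trmx_mul map_mxM. Qed.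

Lemma tr_diag4 {C : comNzRingType} n (x y : 'rV[C]_n) (M N : 'M[C]_n) :
  \tr (diag_mx x *m M *m diag_mx y *m N) =
  \sum_i \sum_j x 0 i * M i j * y 0 j * N j i.
Proof.
rewrite /mxtrace; apply: eq_bigr => i _; rewrite mxE; apply: eq_bigr => j _.
by rewrite mul_mx_diag mul_diag_mx !mxE.
Qed.

Lemma tr_conj {C : comNzRingType} n (P D1 D2 H K : 'M[C]_n) (Q : 'M[C]_n) :
  \tr (Q *m D1 *m P *m H *m (Q *m D2 *m P) *m K) =
  \tr (D1 *m (P *m H *m Q) *m D2 *m (P *m K *m Q)).
Proof.
rewrite -!mulmxA mxtrace_mulC !mulmxA; congr mxtrace; rewrite !mulmxA //.
Qed.

Section Spec.
Context {R : realType}.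
Local Notation C := (R[i]).

Lemma spec_facts n (rho : 'M[C]_n) : posdefmx rho ->
  let P := spectralmx rho in let d := spectral_diag rho in
  [/\ P *m P^t* = 1%:M, P^t* *m P = 1%:M,
      rho = P^t* *m diag_mx d *m P,
      forall i, d 0 i = real_complex R (complex.Re (d 0 i)) &
      forall i, 0 < complex.Re (d 0 i)].
Proof.
move=> [herm pos] P d.
have PU : P *m P^t* = 1%:M by apply/unitarymxP; exact: spectral_unitarymx.
have PU' : P^t* *m P = 1%:M.
  by rewrite -invmx_unitary ?spectral_unitarymx // mulVmx // spectral_unit.
have rhoE : rho = P^t* *m diag_mx d *m P.
  have := orthomx_spectralP (hermitian_normalmx herm).
  by rewrite invmx_unitary ?spectral_unitarymx.
have dre : forall i, d 0 i = real_complex R (complex.Re (d 0 i)).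
  move=> i; have /mxOverP/(_ 0 i) := hermitian_spectral_diag_real herm.
  by move=> /RRe_real.
split => // i.
set v : 'rV[C]_n := delta_mx 0 i *m P.
have dT : (delta_mx 0 i : 'rV[C]_n)^t* = delta_mx i 0.
  by rewrite trmx_delta map_delta_mx.
have vv : v *m v^t* = 1%:M.
  rewrite /v tmulC !mulmxA mulmxtVK ?spectral_unitarymx // dT mul_delta_mx.
  by apply/matrixP => a b; rewrite !ord1 !mxE.
have vrv : (v *m rho *m v^t*) 0 0 = d 0 i.
  rewrite /v tmulC rhoE !mulmxA !mulmxtVK ?spectral_unitarymx //.
  by rewrite -rowE row_diag_mx -scalemxAl dT mul_delta_mx !mxE !eqxx mulr1.
have vn0 : v != 0.
  apply/eqP => v0; move: vv; rewrite v0 mul0mx => /matrixP/(_ 0 0).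
  by rewrite !mxE /= => /eqP; rewrite eq_sym oner_eq0.
have := pos v vn0; rewrite vrv dre.
by rewrite ltcR.
Qed.


Lemma tr_tC n (X : 'M[C]_n) : \tr (X^t*) = (\tr X)^*.
Proof. by rewrite /mxtrace rmorph_sum; apply: eq_bigr => i _; rewrite !mxE. Qed.

Lemma hermT n (A : 'M[C]_n) : A \is hermsymmx -> A^t* = A.
Proof. by move=> /is_hermitianmxP h; rewrite {2}h expr0 scale1r. Qed.

Lemma tr_herm_real n (A B : 'M[C]_n) : A \is hermsymmx -> B \is hermsymmx ->
  (\tr (A *m B))^* = \tr (A *m B).
Proof.
move=> hA hB.
have e : \tr ((A *m B)^t*) = (\tr (A *m B))^*.
  by rewrite /mxtrace rmorph_sum; apply: eq_bigr => i _; rewrite !mxE.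
by rewrite -e tmulC (hermT hA) (hermT hB) mxtrace_mulC.
Qed.

Lemma centered_herm n (rho H : 'M[C]_n) : rho \is hermsymmx -> H \is hermsymmx ->
  (centered rho H)^t* = centered rho H.
Proof.
move=> hr hH; have hc := tr_herm_real hr hH.
apply/matrixP => i j; rewrite /centered !mxE rmorphB /= rmorphMn /= hc -(hermE hH i j) eq_sym.
done.
Qed.

Definition nz (z : C) : R := Num.sqrt (complex.Re z ^+ 2 + complex.Im z ^+ 2).

Lemma nz_ge0 z : 0 <= nz z. Proof. exact: sqrtr_ge0. Qed.
Lemma normE z : `|z| = real_complex R (nz z). Proof. exact: normc_def. Qed.
Lemma nz_conj z : nz (z^*) = nz z.
Proof. by apply: complexI; rewrite -!normE norm_conjC. Qed.
Lemma mulJ z : z * z^* = real_complex R (nz z ^+ 2).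
Proof. by rewrite rmorphXn /= -normE normCK. Qed.
Lemma mulJ' z : z * z^* = real_complex R (nz z) * real_complex R (nz z).
Proof. by rewrite -normCK expr2 normE. Qed.
Lemma norm_rc (x : R) : `|real_complex R x| = real_complex R `|x|.
Proof. by rewrite normE /nz /= expr0n /= addr0 sqrtr_sqr. Qed.



Lemma conjP_tC n (P X : 'M[C]_n) : (P *m X *m P^t*)^t* = P *m X^t* *m P^t*.
Proof. by rewrite !tmulC trmxCK mulmxA. Qed.

Lemma mxpowE n (rho : 'M[C]_n) t : mxpowR rho t =
  (spectralmx rho)^t* *m diag_mx (\row_j real_complex R (complex.Re (spectral_diag rho 0 j) `^ t))
  *m spectralmx rho.
Proof.
have e : map_mx (fun z : C => real_complex R (powR (complex.Re z) t)) (spectral_diag rho) =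
   \row_j real_complex R (complex.Re (spectral_diag rho 0 j) `^ t).
  by apply/matrixP => i j; rewrite !mxE (ord1 i).
by rewrite /mxpowR e.
Qed.

Lemma skewE n (rho H : 'M[C]_n) t : posdefmx rho -> H \is hermsymmx ->
  skew_term rho H t = real_complex R (\sum_i \sum_j
     pw (complex.Re (spectral_diag rho 0 i)) (complex.Re (spectral_diag rho 0 j)) t *
     nz ((spectralmx rho *m centered rho H *m (spectralmx rho)^t*) i j) ^+ 2).
Proof.
move=> pd hH.
set P := spectralmx rho; set M := P *m centered rho H *m P^t*.
have hM : forall i j, M j i = (M i j)^*.
  move=> i j; apply: hermE; apply/is_hermitianmxP; rewrite expr0 scale1r.
  by rewrite /M conjP_tC centered_herm //; case: pd.
rewrite /skew_term !mxpowE -/P tr_conj tr_diag4 -/M; clearbody M.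
rewrite rmorph_sum; apply: eq_bigr => i _.
rewrite rmorph_sum; apply: eq_bigr => j _; rewrite hM !mxE.
rewrite /pw !rmorphM /= nz_conj -mulJ'; ring.
Qed.

Lemma mxpow1 n (rho : 'M[C]_n) : posdefmx rho -> mxpowR rho 1 = rho.
Proof.
move=> pd; have [_ _ rhoE dre dpos] := spec_facts pd.
have e : \row_j real_complex R (complex.Re (spectral_diag rho 0 j) `^ 1) = spectral_diag rho.
  by apply/matrixP => i j; rewrite !mxE (ord1 i) powRr1 ?ltW // -dre.
by rewrite mxpowE e -rhoE.
Qed.

Lemma mxpow0 n (rho : 'M[C]_n) : posdefmx rho -> mxpowR rho 0 = 1%:M.
Proof.
move=> pd; have [_ PU' _ _ _] := spec_facts pd.
rewrite mxpowE.
have -> : \row_j real_complex R (complex.Re (spectral_diag rho 0 j) `^ 0) = const_mx 1.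
  by apply/matrixP => i j; rewrite !mxE powRr0.
by rewrite diag_const_mx mulmx1 PU'.
Qed.

Lemma rho_term n (rho H : 'M[C]_n) : posdefmx rho ->
  \tr (rho *m (centered rho H *m centered rho H)) = skew_term rho H 1.
Proof.
by move=> pd; rewrite /skew_term subrr mxpow0 // mxpow1 // mulmx1 mulmxA.
Qed.

Lemma rc_half : real_complex R 2^-1 = 2^-1.
Proof. by rewrite fmorphV /= rmorph_nat. Qed.

End Spec.

Section Main.
Context {R : realType}.
Local Notation C := (R[i]).

Lemma IfunE n (rho H : 'M[C]_n) a b : posdefmx rho -> H \is hermsymmx ->
  Ifun rho a b H = real_complex R (2^-1 * \sum_i \sum_j
     gI a b (complex.Re (spectral_diag rho 0 i)) (complex.Re (spectral_diag rho 0 j)) *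
     nz ((spectralmx rho *m centered rho H *m (spectralmx rho)^t*) i j) ^+ 2).
Proof.
move=> pd hH; rewrite /Ifun rho_term // !skewE //.
set M := spectralmx rho *m centered rho H *m (spectralmx rho)^t*.
set d := spectral_diag rho.
have e : \sum_i \sum_j gI a b (complex.Re (d 0 i)) (complex.Re (d 0 j)) * nz (M i j) ^+ 2 =
   \sum_i \sum_j pw (complex.Re (d 0 i)) (complex.Re (d 0 j)) 1 * nz (M i j) ^+ 2 +
   \sum_i \sum_j pw (complex.Re (d 0 i)) (complex.Re (d 0 j)) (a + b) * nz (M i j) ^+ 2 -
   \sum_i \sum_j pw (complex.Re (d 0 i)) (complex.Re (d 0 j)) a * nz (M i j) ^+ 2 -
   \sum_i \sum_j pw (complex.Re (d 0 i)) (complex.Re (d 0 j)) b * nz (M i j) ^+ 2.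
  rewrite -big_split -!sumrB; apply: eq_bigr => i _ /=.
  rewrite -big_split -!sumrB; apply: eq_bigr => j _ /=.
  rewrite /gI; ring.
rewrite e rmorphM /= rc_half !rmorphB /= rmorphD.
by [].
Qed.
Lemma JfunE n (rho H : 'M[C]_n) a b : posdefmx rho -> H \is hermsymmx ->
  Jfun rho a b H = real_complex R (2^-1 * \sum_i \sum_j
     gJ a b (complex.Re (spectral_diag rho 0 i)) (complex.Re (spectral_diag rho 0 j)) *
     nz ((spectralmx rho *m centered rho H *m (spectralmx rho)^t*) i j) ^+ 2).
Proof.
move=> pd hH; rewrite /Jfun rho_term // !skewE //.
set M := spectralmx rho *m centered rho H *m (spectralmx rho)^t*.
set d := spectral_diag rho.
have e : \sum_i \sum_j gJ a b (complex.Re (d 0 i)) (complex.Re (d 0 j)) * nz (M i j) ^+ 2 =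
   \sum_i \sum_j pw (complex.Re (d 0 i)) (complex.Re (d 0 j)) 1 * nz (M i j) ^+ 2 +
   \sum_i \sum_j pw (complex.Re (d 0 i)) (complex.Re (d 0 j)) (a + b) * nz (M i j) ^+ 2 +
   \sum_i \sum_j pw (complex.Re (d 0 i)) (complex.Re (d 0 j)) a * nz (M i j) ^+ 2 +
   \sum_i \sum_j pw (complex.Re (d 0 i)) (complex.Re (d 0 j)) b * nz (M i j) ^+ 2.
  rewrite -!big_split; apply: eq_bigr => i _ /=.
  rewrite -!big_split; apply: eq_bigr => j _ /=.
  rewrite /gJ; ring.
rewrite e rmorphM /= rc_half !rmorphD /=.
by [].
Qed.

Lemma zmod_cancel (V : zmodType) (p q r k p' : V) :
  (p + q) + (r + k) - ((p' + r) + (q + k)) = p - p'.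
Proof.
by rewrite addrACA opprD (addrACA (p + r)) subrr addr0 opprD addrACA subrr addr0.
Qed.


Lemma comm_centered n (rho A B : 'M[C]_n) :
  commmx A B = centered rho A *m centered rho B - centered rho B *m centered rho A.
Proof.
set A0 := centered rho A; set B0 := centered rho B.
have eA : A = A0 + (\tr (rho *m A))%:M by rewrite /A0 /centered subrK.
have eB : B = B0 + (\tr (rho *m B))%:M by rewrite /B0 /centered subrK.
rewrite /commmx [in LHS]eA [in LHS]eB; clearbody A0 B0.
move: (\tr (rho *m A)) (\tr (rho *m B)) => a b.
rewrite !mulmxDl !mulmxDr !mul_mx_scalar !mul_scalar_mx.
have -> : a *: b%:M = b *: (a%:M : 'M[C]_n) by rewrite !scale_scalar_mx mulrC.
by rewrite zmod_cancel.
Qed.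


Lemma trXY n (rho X Y : 'M[C]_n) : posdefmx rho ->
  \tr (rho *m (X *m Y)) = \sum_i \sum_j real_complex R (complex.Re (spectral_diag rho 0 i)) *
     (spectralmx rho *m X *m (spectralmx rho)^t*) i j *
     (spectralmx rho *m Y *m (spectralmx rho)^t*) j i.
Proof.
move=> pd.
have -> : rho *m (X *m Y) = mxpowR rho 1 *m X *m mxpowR rho 0 *m Y.
  by rewrite mxpow0 // mxpow1 // mulmx1 mulmxA.
have [_ _ _ dre dpos] := spec_facts pd.
rewrite !mxpowE tr_conj tr_diag4; apply: eq_bigr => i _; apply: eq_bigr => j _.
by rewrite !mxE powRr1 ?ltW // powRr0 /= mulr1.
Qed.

Lemma herm_conjP n (rho H : 'M[C]_n) : posdefmx rho -> H \is hermsymmx ->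
  forall i j, (spectralmx rho *m centered rho H *m (spectralmx rho)^t*) j i =
   ((spectralmx rho *m centered rho H *m (spectralmx rho)^t*) i j)^*.
Proof.
move=> pd hH i j; apply: hermE; apply/is_hermitianmxP; rewrite expr0 scale1r.
by rewrite conjP_tC centered_herm //; case: pd.
Qed.

Lemma norm_comm n (rho A B : 'M[C]_n) : posdefmx rho -> A \is hermsymmx -> B \is hermsymmx ->
  `|\tr (rho *m commmx A B)| <= real_complex R (\sum_i \sum_j
     `|complex.Re (spectral_diag rho 0 i) - complex.Re (spectral_diag rho 0 j)| *
     nz ((spectralmx rho *m centered rho A *m (spectralmx rho)^t*) i j) *
     nz ((spectralmx rho *m centered rho B *m (spectralmx rho)^t*) i j)).
Proof.
move=> pd hA hB.
have hMB := herm_conjP pd hB.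
rewrite (comm_centered rho) mulmxBr raddfB /= !trXY //.
set MA := spectralmx rho *m centered rho A *m (spectralmx rho)^t*.
set MB := spectralmx rho *m centered rho B *m (spectralmx rho)^t*.
rewrite -/MB in hMB.
set lam := fun i => complex.Re (spectral_diag rho 0 i).
rewrite -/(lam _).
rewrite [X in _ - X]exchange_big /= -sumrB.
apply: le_trans (ler_norm_sum _ _ _) _; rewrite rmorph_sum; apply: ler_sum => i _.
rewrite -sumrB.
apply: le_trans (ler_norm_sum _ _ _) _; rewrite rmorph_sum; apply: ler_sum => j _.
have -> : real_complex R (lam i) * MA i j * MB j i - real_complex R (lam j) * MB j i * MA i j =
   real_complex R (lam i - lam j) * MA i j * MB j i by rewrite rmorphB /=; ring.
rewrite !normrM norm_rc !normE hMB nz_conj !rmorphM /=.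
by [].
Qed.

Lemma gsum_ge0 n (lam : 'I_n -> R) (u : 'I_n -> 'I_n -> R) (g : R -> R -> R) :
  (forall i j, 0 <= g (lam i) (lam j) + g (lam j) (lam i)) ->
  (forall i j, u i j = u j i) ->
  0 <= 2^-1 * \sum_i \sum_j g (lam i) (lam j) * u i j ^+ 2.
Proof.
move=> gp us.
have e : \sum_i \sum_j g (lam i) (lam j) * u i j ^+ 2 =
         \sum_i \sum_j g (lam j) (lam i) * u i j ^+ 2.
  rewrite exchange_big /=; apply: eq_bigr => i _; apply: eq_bigr => j _.
  by rewrite us.
have -> : 2^-1 * \sum_i \sum_j g (lam i) (lam j) * u i j ^+ 2 =
   \sum_i \sum_j ((g (lam i) (lam j) + g (lam j) (lam i)) / 4 * u i j ^+ 2).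
  have -> : \sum_i \sum_j ((g (lam i) (lam j) + g (lam j) (lam i)) / 4 * u i j ^+ 2) =
      4^-1 * (\sum_i \sum_j g (lam i) (lam j) * u i j ^+ 2 +
              \sum_i \sum_j g (lam j) (lam i) * u i j ^+ 2).
    rewrite -big_split mulr_sumr; apply: eq_bigr => i _ /=.
    rewrite -big_split mulr_sumr; apply: eq_bigr => j _ /=; ring.
  by rewrite -e; field.
apply: sumr_ge0 => i _; apply: sumr_ge0 => j _.
by apply: mulr_ge0; [apply: divr_ge0|apply: sqr_ge0].
Qed.

Lemma sqrtC_rc (x : R) : 0 <= x -> sqrtC (real_complex R x) = real_complex R (Num.sqrt x).
Proof.
move=> x0; apply/eqP; rewrite -(@eqrXn2 _ 2) //.
- by rewrite sqrtCK -rmorphXn /= sqr_sqrtr.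
- by rewrite sqrtC_ge0 ler0c.
- by rewrite ler0c sqrtr_ge0.
Qed.

Lemma final_real (X IA JA IB JB : R) : 0 <= X -> 0 <= IA -> 0 <= JA -> 0 <= IB -> 0 <= JB ->
  X <= IA * JB -> X <= IB * JA -> X <= Num.sqrt (IA * JA) * Num.sqrt (IB * JB).
Proof.
move=> X0 IA0 JA0 IB0 JB0 h1 h2.
rewrite -sqrtrM ?mulr_ge0 //.
have h : X ^+ 2 <= IA * JA * (IB * JB).
  have -> : IA * JA * (IB * JB) = (IA * JB) * (IB * JA) by ring.
  by rewrite expr2; apply: ler_pM.
rewrite -(ger0_norm X0) -sqrtr_sqr ler_sqrt //.
by apply: mulr_ge0; apply: mulr_ge0.
Qed.

Lemma final_C (T : C) (S ab IA JA IB JB : R) : `|T| <= real_complex R S ->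
  0 <= ab -> 0 <= IA -> 0 <= JA -> 0 <= IB -> 0 <= JB ->
  ab * S ^+ 2 <= IA * JB -> ab * S ^+ 2 <= IB * JA ->
  real_complex R ab * `|T| ^+ 2 <=
  sqrtC (real_complex R IA * real_complex R JA) * sqrtC (real_complex R IB * real_complex R JB).
Proof.
move=> hT ab0 IA0 JA0 IB0 JB0 h1 h2.
rewrite -!rmorphM /= !sqrtC_rc ?mulr_ge0 // -rmorphM /=.
apply: (le_trans (y := real_complex R (ab * S ^+ 2))).
  rewrite rmorphM rmorphXn /=; apply: ler_wpM2l; first by rewrite ler0c.
  by apply: lerXn2r; rewrite ?nnegrE ?normr_ge0 // (le_trans _ hT).
rewrite lecR; apply: final_real => //.
by apply: mulr_ge0 => //; apply: sqr_ge0.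
Qed.

Definition lamf n (rho : 'M[C]_n) i := complex.Re (spectral_diag rho 0 i).
Definition uf n (rho H : 'M[C]_n) i j :=
  nz ((spectralmx rho *m centered rho H *m (spectralmx rho)^t*) i j).

Lemma IfunE' n (rho H : 'M[C]_n) a b : posdefmx rho -> H \is hermsymmx ->
  Ifun rho a b H = real_complex R (2^-1 * \sum_i \sum_j
     gI a b (lamf rho i) (lamf rho j) * uf rho H i j ^+ 2).
Proof. exact: IfunE. Qed.

Lemma JfunE' n (rho H : 'M[C]_n) a b : posdefmx rho -> H \is hermsymmx ->
  Jfun rho a b H = real_complex R (2^-1 * \sum_i \sum_j
     gJ a b (lamf rho i) (lamf rho j) * uf rho H i j ^+ 2).
Proof. exact: JfunE. Qed.

Lemma norm_comm' n (rho A B : 'M[C]_n) : posdefmx rho -> A \is hermsymmx -> B \is hermsymmx ->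
  `|\tr (rho *m commmx A B)| <= real_complex R (\sum_i \sum_j
     `|lamf rho i - lamf rho j| * uf rho A i j * uf rho B i j).
Proof. exact: norm_comm. Qed.

Lemma uf_sym n (rho H : 'M[C]_n) : posdefmx rho -> H \is hermsymmx ->
  forall i j, uf rho H i j = uf rho H j i.
Proof. by move=> pd hH i j; rewrite /uf (herm_conjP pd hH i j) nz_conj. Qed.

Lemma lamf_pos n (rho : 'M[C]_n) : posdefmx rho -> forall i, 0 < lamf rho i.
Proof. by move=> pd i; have [_ _ _ _ dpos] := spec_facts pd; exact: dpos. Qed.

Lemma sum_swap n (l : 'I_n -> R) (u v : 'I_n -> 'I_n -> R) :
  \sum_i \sum_j `|l i - l j| * u i j * v i j = \sum_i \sum_j `|l i - l j| * v i j * u i j.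
Proof. by apply: eq_bigr => i _; apply: eq_bigr => j _; rewrite mulrAC. Qed.

End Main.

Theorem theorem3p1 (R : realType) (n : nat) (rho A B : 'M[R[i]]_n) (alpha beta : R) :
  density_mx rho -> rho \in unitmx ->
  A \is hermsymmx -> B \is hermsymmx ->
  0 <= alpha -> 0 <= beta ->
  (1 <= alpha + beta \/ alpha + beta <= 2^-1) ->
  real_complex R (alpha * beta) * `|\tr (rho *m commmx A B)| ^+ 2
    <= Ufun rho alpha beta A * Ufun rho alpha beta B.
Proof.
move=> [pd _] _ hA hB a0 b0 hs.
have uAs := uf_sym pd hA.
have uBs := uf_sym pd hB.
have uA0 : forall i j, 0 <= uf rho A i j by move=> i j; exact: nz_ge0.
have uB0 : forall i j, 0 <= uf rho B i j by move=> i j; exact: nz_ge0.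
have lp := lamf_pos pd.
have coreAB := real_core a0 b0 hs lp uA0 uAs uB0 uBs.
have coreBA := real_core a0 b0 hs lp uB0 uBs uA0 uAs.
have gIp : forall i j, 0 <= gI alpha beta (lamf rho i) (lamf rho j) + gI alpha beta (lamf rho j) (lamf rho i).
  by move=> i j; have [] := pair_pos a0 b0 hs (lp i) (lp j).
have gJp : forall i j, 0 <= gJ alpha beta (lamf rho i) (lamf rho j) + gJ alpha beta (lamf rho j) (lamf rho i).
  by move=> i j; have [_ /ltW] := pair_pos a0 b0 hs (lp i) (lp j).
have IA0 := gsum_ge0 gIp uAs.
have IB0 := gsum_ge0 gIp uBs.
have JA0 := gsum_ge0 gJp uAs.
have JB0 := gsum_ge0 gJp uBs.
have nb := norm_comm' pd hA hB.
have ab0 : 0 <= alpha * beta by apply: mulr_ge0.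
rewrite (sum_swap (lamf rho) (uf rho B) (uf rho A)) in coreBA.
rewrite /Ufun (IfunE' _ _ pd hA) (JfunE' _ _ pd hA) (IfunE' _ _ pd hB) (JfunE' _ _ pd hB).
exact: (final_C nb ab0 IA0 JA0 IB0 JB0 coreAB coreBA).
Qed.
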